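(* For fixed $N\ge1$, $\omega_1,\dots,\omega_N\in\mathbb{R}$ and $\kappa\ne0$, the system \[ \dot\theta_i=\omega_i-\frac{\kappa}{N}\sum_{j=1}^N(1+\cos\theta_j)\sin\theta_i,\qquad i=1,\dots,N, \] has at most $2^{N+1}$ equilibria that are distinct modulo $2\pi$.
   Context: An equilibrium is $\Theta\in\mathbb{R}^N$ at which all right-hand sides vanish; two equilibria are distinct modulo $2\pi$ if they differ as points of $(\mathbb{R}/2\pi\mathbb{Z})^N$. *)

(* Defs.v *)
From Stdlib Require Import Reals Lra Lia List ZArith.
Open Scope R_scope.

Fixpoint sumN (N : nat) (f : nat -> R) : R :=
  match N with
  | O => 0
  | S n => sumN n f + f n
  end.

(* Right-hand side of equation i (indices shifted to 0..N-1). *)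
Definition rhs (N : nat) (omega : nat -> R) (kappa : R) (theta : nat -> R) (i : nat) : R :=
  omega i - kappa / INR N * sumN N (fun j => (1 + cos (theta j)) * sin (theta i)).

Definition is_equilibrium (N : nat) (omega : nat -> R) (kappa : R) (theta : nat -> R) : Prop :=
  forall i, (i < N)%nat -> rhs N omega kappa theta i = 0.

Definition eq_mod_2pi (N : nat) (theta theta' : nat -> R) : Prop :=
  forall i, (i < N)%nat -> exists k : Z, theta i - theta' i = 2 * PI * IZR k.

(* Main.v *)
Require Import Defs.
From Stdlib Require Import Reals List Lra Lia ZArith.
Open Scope R_scope.


Lemma same_sin_cos x y : sin x = sin y -> cos x = cos y ->
  exists k : Z, x - y = 2 * PI * IZR k.
Proof.
intros Hs Hc.
assert (Hd : cos (x - y) = 1).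
{ rewrite cos_minus, <- Hs, <- Hc. pose proof (sin2_cos2 x). unfold Rsqr in *. lra. }
assert (H2 : cos (2 * ((x - y) / 2)) = 1 - 2 * sin ((x - y) / 2) * sin ((x - y) / 2))
  by apply cos_2a_sin.
replace (2 * ((x - y) / 2)) with (x - y) in H2 by field.
assert (H0 : sin ((x - y) / 2) = 0).
{ assert (sin ((x - y) / 2) * sin ((x - y) / 2) = 0) by lra.
  destruct (Rmult_integral _ _ H); auto. }
destruct (sin_eq_0_0 _ H0) as [k Hk]. exists k. lra.
Qed.

Lemma sumN_mulr N f x : sumN N (fun j => f j * x) = sumN N f * x.
Proof. induction N; simpl; [ring | rewrite IHN; ring]. Qed.

Lemma sumN_plus N f h : sumN N (fun j => f j + h j) = sumN N f + sumN N h.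
Proof. induction N; simpl; [ring | rewrite IHN; ring]. Qed.

Lemma sumN_const1 N : sumN N (fun _ => 1) = INR N.
Proof. induction N; simpl; [reflexivity | rewrite IHN; destruct N; simpl; ring]. Qed.

Lemma sumN_nonneg_zero N f : (forall j, (j < N)%nat -> 0 <= f j) -> sumN N f = 0 ->
  forall j, (j < N)%nat -> f j = 0.
Proof.
induction N; intros Hnn Hs j Hj; [lia|].
simpl in Hs.
assert (Hpos : 0 <= sumN N f).
{ clear -Hnn. induction N; simpl; [lra|].
  assert (0 <= f N) by (apply Hnn; lia).
  assert (0 <= sumN N f) by (apply IHN; intros; apply Hnn; lia). lra. }
assert (HN : 0 <= f N) by (apply Hnn; lia).
destruct (Nat.eq_dec j N) as [->|Hne]; [lra|].
apply IHN; [intros; apply Hnn; lia | lra | lia].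
Qed.

Definition Sv (N : nat) (th : nat -> R) : R := sumN N (fun j => 1 + cos (th j)).

Lemma Sv_eq N th : Sv N th = INR N + sumN N (fun j => cos (th j)).
Proof. unfold Sv. rewrite sumN_plus, sumN_const1. reflexivity. Qed.

Lemma Sv_sq N th : Sv N th * Sv N th = INR N * Sv N th + sumN N (fun j => Sv N th * cos (th j)).
Proof.
assert (E : sumN N (fun j => Sv N th * cos (th j)) = sumN N (fun j => cos (th j)) * Sv N th).
{ generalize (Sv N th). intro s. clear. induction N; simpl; [ring| rewrite IHN; ring]. }
rewrite E. pattern (Sv N th) at 1. rewrite Sv_eq. ring.
Qed.

Lemma equil_sin N omega kappa th : (1 <= N)%nat -> kappa <> 0 ->
  is_equilibrium N omega kappa th -> forall j, (j < N)%nat ->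
  Sv N th * sin (th j) = omega j * INR N / kappa.
Proof.
intros HN Hk He j Hj. specialize (He j Hj). unfold rhs in He.
rewrite sumN_mulr in He. fold (Sv N th) in He.
assert (INR N <> 0) by (apply not_0_INR; lia).
apply (Rmult_eq_reg_l (kappa / INR N)); [|unfold Rdiv; apply Rmult_integral_contrapositive; split; auto; apply Rinv_neq_0_compat; auto].
field_simplify; [|auto|auto]. lra.
Qed.

Lemma equil_g2 N omega kappa th : (1 <= N)%nat -> kappa <> 0 ->
  is_equilibrium N omega kappa th -> forall j, (j < N)%nat ->
  (Sv N th * cos (th j)) * (Sv N th * cos (th j)) =
  Sv N th * Sv N th - (omega j * INR N / kappa) * (omega j * INR N / kappa).
Proof.
intros HN Hk He j Hj. rewrite <- (equil_sin N omega kappa th HN Hk He j Hj).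
pose proof (sin2_cos2 (th j)). unfold Rsqr in H.
replace (Sv N th * Sv N th - Sv N th * sin (th j) * (Sv N th * sin (th j)))
  with (Sv N th * Sv N th * (1 - sin (th j) * sin (th j))) by ring.
replace (1 - sin (th j) * sin (th j)) with (cos (th j) * cos (th j)) by lra.
ring.
Qed.

Lemma points_eq N omega kappa th th' : (1 <= N)%nat -> kappa <> 0 ->
  is_equilibrium N omega kappa th -> is_equilibrium N omega kappa th' ->
  Sv N th = Sv N th' ->
  (forall j, (j < N)%nat -> Sv N th * cos (th j) = Sv N th' * cos (th' j)) ->
  eq_mod_2pi N th th'.
Proof.
intros HN Hk He He' HS Hg j Hj.
apply same_sin_cos.
- destruct (Req_dec (Sv N th) 0) as [H0|H0].
  + assert (Hc : forall t, Sv N t = 0 -> (j < N)%nat -> sin (t j) = 0).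
    { intros t Ht Hj'. assert (E := sumN_nonneg_zero N (fun j => 1 + cos (t j))).
      assert (1 + cos (t j) = 0).
      { apply E; auto. intros; pose proof (COS_bound (t j0)); lra. }
      pose proof (sin2_cos2 (t j)). unfold Rsqr in H1.
      assert (sin (t j) * sin (t j) = 0) by nra.
      destruct (Rmult_integral _ _ H2); auto. }
    rewrite (Hc th), (Hc th'); auto. rewrite <- HS; auto.
  + pose proof (equil_sin N omega kappa th HN Hk He j Hj) as A1.
    pose proof (equil_sin N omega kappa th' HN Hk He' j Hj) as A2.
    rewrite <- HS in A2. apply (Rmult_eq_reg_l (Sv N th)); auto. lra.
- destruct (Req_dec (Sv N th) 0) as [H0|H0].
  + assert (Hc : forall t, Sv N t = 0 -> (j < N)%nat -> cos (t j) = -1).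
    { intros t Ht Hj'. assert (E := sumN_nonneg_zero N (fun j => 1 + cos (t j))).
      assert (1 + cos (t j) = 0).
      { apply E; auto. intros; pose proof (COS_bound (t j0)); lra. }
      lra. }
    rewrite (Hc th), (Hc th'); auto. rewrite <- HS; auto.
  + specialize (Hg j Hj). rewrite <- HS in Hg. apply (Rmult_eq_reg_l (Sv N th)); auto.
Qed.


From mathcomp Require Import all_boot all_order all_algebra.
From mathcomp Require Import ring.
From mathcomp Require Import Rstruct.
Set Implicit Arguments. Unset Strict Implicit. Unset Printing Implicit Defensive.
Import GRing.Theory.
Local Open Scope ring_scope.


Definition mulv (F : fieldType) (M : nat) (u v : 'rV[F]_M) : 'rV[F]_M :=
  \row_k (u 0 k * v 0 k).

Definition genv (F : fieldType) (N M : nat) (S : 'I_M -> F) (g : 'I_M -> 'I_N -> F)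
  (be : bool * {set 'I_N}) : 'rV[F]_M :=
  \row_k (S k ^+ be.1 * \prod_(j in be.2) g k j).

Definition Wsp (F : fieldType) (N M : nat) (S : 'I_M -> F) (g : 'I_M -> 'I_N -> F) : 'M[F]_M :=
  (\sum_(be : bool * {set 'I_N}) <<genv S g be>>)%MS.

Lemma mulvD (F : fieldType) M (x a b : 'rV[F]_M) : mulv x (a + b) = mulv x a + mulv x b.
Proof. by apply/rowP => k; rewrite !mxE mulrDr. Qed.
Lemma mulvZ (F : fieldType) M (x a : 'rV[F]_M) c : mulv x (c *: a) = c *: mulv x a.
Proof. by apply/rowP => k; rewrite !mxE mulrCA. Qed.
Lemma mulv0 (F : fieldType) M (x : 'rV[F]_M) : mulv x 0 = 0.
Proof. by apply/rowP => k; rewrite !mxE mulr0. Qed.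

Lemma genv_sub (F : fieldType) N M (S : 'I_M -> F) (g : 'I_M -> 'I_N -> F) be : (genv S g be <= Wsp S g)%MS.
Proof. by apply: (sumsmx_sup be) => //; rewrite genmxE. Qed.

Lemma card_setsN N : #|{set 'I_N}| = (2 ^ N)%N.
Proof. by rewrite -cardsT -powersetT card_powerset cardsT card_ord. Qed.

Lemma Wsp_rank (F : fieldType) N M (S : 'I_M -> F) (g : 'I_M -> 'I_N -> F) : (\rank (Wsp S g) <= 2 ^ N.+1)%N.
Proof.
have -> : (2 ^ N.+1 = \sum_(be : bool * {set 'I_N}) 1)%N.
  by rewrite sum1_card card_prod card_bool card_setsN expnS.
rewrite /Wsp; elim/big_rec2: _ => [|be n A _ IH]; first by rewrite mxrank0.
apply: leq_trans (mxrank_adds_leqif _ _).1 _.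
by rewrite genmxE leq_add // rank_leq_row.
Qed.

Lemma mulv_closed (F : fieldType) N M (S : 'I_M -> F) (g : 'I_M -> 'I_N -> F) (x : 'rV[F]_M) :
  (forall be, (mulv x (genv S g be) <= Wsp S g)%MS) ->
  forall v, (v <= Wsp S g)%MS -> (mulv x v <= Wsp S g)%MS.
Proof.
move=> H v /sub_sumsmxP [u ->].
apply: (big_ind (fun v => (mulv x v <= Wsp S g)%MS)).
- by rewrite mulv0 sub0mx.
- by move=> a b Ha Hb; rewrite mulvD addmx_sub.
move=> be _.
have : (u be *m <<genv S g be>> <= genv S g be)%MS.
  by rewrite (submx_trans (submxMl _ _)) ?genmxE.
by case/sub_rVP => c ->; rewrite mulvZ scalemx_sub.
Qed.


Definition s2v (F : fieldType) N M (S : 'I_M -> F) (g : 'I_M -> 'I_N -> F) (e : {set 'I_N}) : 'rV[F]_M :=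
  \row_k (S k ^+ 2 * \prod_(j in e) g k j).

Definition grow (F : fieldType) N M (g : 'I_M -> 'I_N -> F) (j : 'I_N) (e : {set 'I_N}) : 'rV[F]_M :=
  \row_k (g k j * \prod_(i in e) g k i).

Lemma S2_sub (F : fieldType) N M (S : 'I_M -> F) (g : 'I_M -> 'I_N -> F) (A : F) (a : 'I_N -> F)
  (H1 : forall k, S k ^+ 2 = A * S k + \sum_j g k j)
  (H2 : forall k j, g k j ^+ 2 = S k ^+ 2 - a j) :
  forall e : {set 'I_N}, (s2v S g e <= Wsp S g)%MS.
Proof.
suff H : forall n (e : {set 'I_N}), (#|e| < n)%N -> (s2v S g e <= Wsp S g)%MS.
  by move=> e; apply: (H #|e|.+1).
elim=> [//|n IH] e He.
have -> : s2v S g e = A *: genv S g (true, e) + \sum_(j : 'I_N) grow g j e.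
  apply/rowP => k; rewrite !mxE H1 mulrDl summxE.
  rewrite /= expr1 mulrA; congr (_ + _); rewrite mulr_suml.
  by apply: eq_bigr => j _; rewrite mxE.
apply: addmx_sub; first by rewrite scalemx_sub // genv_sub.
apply: summx_sub => j _.
case: (boolP (j \in e)) => je.
  have -> : grow g j e = s2v S g (e :\ j) - a j *: genv S g (false, e :\ j).
    apply/rowP => k; rewrite !mxE (big_setD1 j je) /= expr0 mul1r mulrA -expr2 H2.
    by rewrite mulrBl.
  apply: addmx_sub; last by rewrite -scaleNr scalemx_sub // genv_sub.
  apply: IH; move: He; rewrite (cardsD1 j e) je add1n ltnS; exact.
have -> : grow g j e = genv S g (false, j |: e).
  by apply/rowP => k; rewrite !mxE (big_setU1 _ je) /= expr0 mul1r.
exact: genv_sub.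
Qed.


Lemma xS_closed (F : fieldType) N M (S : 'I_M -> F) (g : 'I_M -> 'I_N -> F) (A : F) (a : 'I_N -> F)
  (H1 : forall k, S k ^+ 2 = A * S k + \sum_j g k j)
  (H2 : forall k j, g k j ^+ 2 = S k ^+ 2 - a j) :
  forall v, (v <= Wsp S g)%MS -> (mulv (\row_k S k) v <= Wsp S g)%MS.
Proof.
apply: mulv_closed => -[[] e].
  have -> : mulv (\row_k S k) (genv S g (true, e)) = s2v S g e.
    by apply/rowP => k; rewrite !mxE /= expr1 mulrA -expr2.
  exact: (S2_sub H1 H2).
have -> : mulv (\row_k S k) (genv S g (false, e)) = genv S g (true, e).
  by apply/rowP => k; rewrite !mxE /= expr1 expr0 mul1r.
exact: genv_sub.
Qed.

Lemma xg_closed (F : fieldType) N M (S : 'I_M -> F) (g : 'I_M -> 'I_N -> F) (A : F) (a : 'I_N -> F)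
  (H1 : forall k, S k ^+ 2 = A * S k + \sum_j g k j)
  (H2 : forall k j, g k j ^+ 2 = S k ^+ 2 - a j) (j : 'I_N) :
  forall v, (v <= Wsp S g)%MS -> (mulv (\row_k g k j) v <= Wsp S g)%MS.
Proof.
apply: mulv_closed => -[b e].
case: (boolP (j \in e)) => je; last first.
  have -> : mulv (\row_k g k j) (genv S g (b, e)) = genv S g (b, j |: e).
    by apply/rowP => k; rewrite !mxE /= (big_setU1 _ je) /= mulrCA.
  exact: genv_sub.
case: b.
  have -> : mulv (\row_k g k j) (genv S g (true, e)) =
     mulv (\row_k S k) (s2v S g (e :\ j)) - a j *: genv S g (true, e :\ j).
    apply/rowP => k; rewrite !mxE /= (big_setD1 j je) /= !expr1.
    set P := \prod_(i in e :\ j) g k i.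
    transitivity (S k * (g k j ^+ 2 * P)); first by ring.
    by rewrite H2; ring.
  apply: addmx_sub; last by rewrite -scaleNr scalemx_sub // genv_sub.
  exact: (xS_closed H1 H2 (S2_sub H1 H2 _)).
have -> : mulv (\row_k g k j) (genv S g (false, e)) =
   s2v S g (e :\ j) - a j *: genv S g (false, e :\ j).
  apply/rowP => k; rewrite !mxE /= (big_setD1 j je) /= !expr0 !mul1r.
  by rewrite mulrA -expr2 H2 mulrBl.
apply: addmx_sub; last by rewrite -scaleNr scalemx_sub // genv_sub.
exact: (S2_sub H1 H2).
Qed.


Lemma count_points (F : fieldType) N M (S : 'I_M -> F) (g : 'I_M -> 'I_N -> F) (A : F) (a : 'I_N -> F)
  (H1 : forall k, S k ^+ 2 = A * S k + \sum_j g k j)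
  (H2 : forall k j, g k j ^+ 2 = S k ^+ 2 - a j)
  (Hd : forall k k', k != k' -> S k != S k' \/ exists j, g k j != g k' j) :
  (M <= 2 ^ N.+1)%N.
Proof.
have sep : forall i k, i != k -> exists x : 'rV[F]_M, x 0 i != x 0 k /\
    forall v, (v <= Wsp S g)%MS -> (mulv x v <= Wsp S g)%MS.
  move=> i k /Hd [hS | [j hj]].
    by exists (\row_k S k); rewrite !mxE; split => //; apply: (xS_closed H1 H2).
  by exists (\row_k g k j); rewrite !mxE; split => //; apply: (xg_closed H1 H2).
have lag : forall i n, exists u : 'rV[F]_M, [/\ (u <= Wsp S g)%MS, u 0 i = 1 &
     forall k : 'I_M, (k < n)%N -> k != i -> u 0 k = 0].
  move=> i; elim=> [|n [u [uW ui uk]]].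
    exists (genv S g (false, set0)); split => //; first exact: genv_sub.
    by rewrite mxE big_set0 expr0 mulr1.
  case: (ltnP n M) => hn; last first.
    exists u; split => // k hk ki; apply: uk ki.
    by apply: (leq_trans (ltn_ord k)).
  pose k0 := Ordinal hn.
  case: (eqVneq i k0) => ik0.
    exists u; split => // k; rewrite ltnS leq_eqVlt => /orP [/eqP hk|hk] ki.
      by case/eqP: ki; rewrite ik0; apply: val_inj.
    exact: uk.
  have [x [hx xW]] := sep _ _ ik0.
  exists ((x 0 i - x 0 k0)^-1 *: (mulv x u - x 0 k0 *: u)); split.
  - by rewrite scalemx_sub // addmx_sub // ?xW // -scaleNr scalemx_sub.
  - by rewrite !mxE ui !mulr1 mulVf // subr_eq0.
  move=> k; rewrite ltnS leq_eqVlt => /orP [/eqP hk|hk] ki.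
    have -> : k = k0 by apply: val_inj.
    by rewrite !mxE subrr mulr0.
  by rewrite !mxE uk // !mulr0 subrr mulr0.
have full : (1%:M <= Wsp S g)%MS.
  apply/row_subP => i; have [u [uW ui uk]] := lag i M.
  suff <- : u = row i 1%:M by [].
  apply/rowP => k; rewrite !mxE.
  case: (eqVneq k i) => [->|ki]; first by rewrite ui.
  by rewrite uk // eq_sym (negbTE ki).
have := mxrankS full; rewrite mxrank1 => h.
exact: leq_trans h (Wsp_rank S g).
Qed.



Open Scope R_scope.

Lemma sumN_big N (f : nat -> R) : sumN N f = (\sum_(j < N) f j)%R.
Proof.
elim: N => [|N IH] /=; first by rewrite big_ord0.
by rewrite big_ord_recr /= IH.
Qed.

Lemma powE n : Nat.pow 2 n = (2 ^ n)%N.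
Proof. elim: n => // n IH; rewrite expnS -IH /=; lia. Qed.

Theorem theorem2p22 (N : nat) (omega : nat -> R) (kappa : R) :
  Peano.le 1 N -> kappa <> 0 ->
  forall l : list (nat -> R),
    (forall theta, In theta l -> is_equilibrium N omega kappa theta) ->
    (forall a b, Peano.lt a (length l) -> Peano.lt b (length l) -> a <> b ->
       ~ eq_mod_2pi N (List.nth a l (fun _ => 0)) (List.nth b l (fun _ => 0))) ->
    Peano.le (length l) (Nat.pow 2 (Nat.add N 1)).
Proof.
move=> HN Hk l Heq Hd.
pose M := length l.
pose th (k : 'I_M) := List.nth k l (fun _ => 0).
have Hin : forall k : 'I_M, is_equilibrium N omega kappa (th k).
  by move=> k; apply: Heq; apply: nth_In; apply/ltP; exact: ltn_ord.
rewrite powE plusE addn1; apply/leP.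
pose c j := omega j * INR N / kappa.
apply: (@count_points _ N M (fun k => Sv N (th k)) (fun k j => Sv N (th k) * cos (th k j))
   (INR N) (fun j => c j * c j)).
- move=> k; rewrite expr2 -(sumN_big N (fun j => Sv N (th k) * cos (th k j))).
  exact: Sv_sq.
- move=> k j; rewrite !expr2.
  exact: (equil_g2 N omega kappa (th k) HN Hk (Hin k) j (elimT ltP (ltn_ord j))).
move=> k k' kk'.
case: (boolP [exists j : 'I_N, Sv N (th k) * cos (th k j) != Sv N (th k') * cos (th k' j)]).
  by move/existsP => [j hj]; right; exists j.
move/existsPn => hno; left; apply/negP => /eqP hS.
apply: (Hd k k'); try (apply/ltP; exact: ltn_ord).
  by move=> h; move/eqP: kk'; apply; apply: val_inj.
apply: (points_eq N omega kappa (th k) (th k') HN Hk (Hin k) (Hin k') hS).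
move=> j /ltP hj.
by have := hno (Ordinal hj); rewrite negbK => /eqP.
Qed.
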